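(* Let $S=\langle S^G,S^\Delta\rangle$ be a triplestore schema and $r:A\rightarrow C$ a rule (as defined in the context). Then $\mathtt{score}(S,r)$ is a basic schema consequence of $S$ by $r$, i.e. $$\mathbb{I}(\mathtt{score}(S,r))=\bigcup_{I\in\mathbb{I}(S)}\{I' \mid I'\subseteq r(I)\}.$$
   Context: **RDF basics.** $\mathbb{U}$ (URIs), $\mathbb{L}$ (literals) and $\mathbb{V}$ (variables) are pairwise disjoint infinite sets; constants are elements of $\mathbb{U}\cup\mathbb{L}$. - A triple is an element of $\mathbb{U}\times\mathbb{U}\times(\mathbb{U}\cup\mathbb{L})$, and a graph is a finite set of triples. - A triple pattern is an element of $(\mathbb{U}\cup\mathbb{V})\times(\mathbb{U}\cup\mathbb{V})\times(\mathbb{U}\cup\mathbb{L}\cup\mathbb{V})$, and a graph pattern is a finite set of triple patterns. For a triple (pattern) $t$ and $i\in\tau=\{1,2,3\}$, $t[i]$ is its $i$-th element (subject, predicate, object). $vars(P)$ and $const(P)$ denote the variables and constants occurring in $P$. - A mapping is a partial function $m:\mathbb{V}\rightharpoonup\mathbb{U}\cup\mathbb{L}$ with domain $dom(m)$. For a pattern $p$, $m(p)$ replaces each $?v\in dom(m)$ by $m(?v)$ and leaves other variables unchanged. - For a graph pattern $P$ and graph $G$, $[\![P]\!]_G$ is the set of mappings $m$ with $dom(m)=vars(P)$ and $m(P)\subseteq G$. **Rules.** A rule $r:A\rightarrow C$ consists of graph patterns $A$ (antecedent) and $C$ (consequent) with $vars(C)\subseteq vars(A)$, where each variable occurs at most once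 in $C$. Its application to a graph $I$ is $$r(I)=I\cup\bigcup_{m\in[\![A]\!]_I}\{m(C) \text{ if } m(C) \text{ is a graph (i.e. no literal in subject/predicate position)}\}.$$ **Schemas.** A triplestore schema is a pair $S=\langle S^G,S^\Delta\rangle$ where: - $S^G$ is a finite set of triple patterns in which each variable occurs at most once (across and within triples); - $S^\Delta\subseteq vars(S^G)$ (the no-literal set) contains every variable occurring in subject or predicate position in $S^G$. A triple pattern $t^S$ models a triple $t$ (w.r.t. $S^\Delta$) if there is a mapping $\mu$ with $\mu(t^S)=t$ that binds no variable of $S^\Delta$ to a literal. The same definition is used when $t$ contains the special URI $\lambda$ below. A graph $I$ is an instance of $S$ if every triple of $I$ is modelled by some $t^S\in S^G$. $\mathbb{I}(S)$ denotes the set of instances of $S$. **Sandbox graph and rewriting.** Fix a fresh URI $\lambda$ not occurring in $S^G$, $A$ or $C$. - The sandbox graph $\mathbb{S}(S)$ consists of, for each $t^S\in S^G$, the triple obtained by replacing every variable in $t^S$ by $\lambda$. - For a triple pattern $t$, its rewritings are the (up to 8) triple patterns $t'$ with $t'[i]\in\{t[i],\lambda\}$ for each $i$. $\mathbb{Q}(A)$ is the set of graph patterns obtained by choosing one rewriting of each $t\in A$. - $[\![\mathbb{Q}(A)]\!]_{\mathbb{S}(S)}$ is the set of mappings $m$ with $dom(m)=vars(A)$ such that $m(q)\subseteq\mathbb{S}(S)$ for some $q\in\mathbb{Q}(A)$. **Definition of $\mathtt{score}(S,r)$.** Initialise $S'^G=S^G$ and $S'^\Delta=S^\Delta$. Then,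 for each $m\in[\![\mathbb{Q}(A)]\!]_{\mathbb{S}(S)}$: 1. Let $\Delta^m$ be the set of variables occurring in subject or predicate position in some triple of $A$ or $C$. 2. For each $t_A\in A$, let $T(t_A)$ be the set of $t^S\in S^G$ that model $m(t_q)$ for some rewriting $t_q$ of $t_A$ with $m(t_q)\in\mathbb{S}(S)$. - (a) If $t_A[3]$ is a literal $l$, or a variable with $m(t_A[3])=l\in\mathbb{L}$, and no $t^S\in T(t_A)$ has $t^S[3]=l$ or $t^S[3]\in vars(S^G)\setminus S^\Delta$, then discard $m$. - (b) If $t_A[3]$ is a variable with $m(t_A[3])=\lambda$ and no $t^S\in T(t_A)$ has $t^S[3]\in vars(S^G)\setminus S^\Delta$, then add $t_A[3]$ to $\Delta^m$. 3. Discard $m$ if it binds some variable of $\Delta^m$ to a literal. 4. If $m$ is not discarded, let $s^m$ be the substitution that maps each $?v$ with $m(?v)\neq\lambda$ to $m(?v)$, and each $?v$ with $m(?v)=\lambda$ to a fresh variable $?v^*$ (new for each $m$ and not used elsewhere). Add $s^m(C)$ to $S'^G$, and add $s^m(\Delta^m)\cap vars(S'^G)$ to $S'^\Delta$. $\mathtt{score}(S,r)$ is the resulting schema $\langle S'^G,S'^\Delta\rangle$. *)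

(* Defs.v *)
From HB Require Import structures.
From mathcomp Require Import all_boot.
From Stdlib Require Import ClassicalEpsilon.
Set Implicit Arguments. Unset Strict Implicit. Unset Printing Implicit Defensive.

(* ---------- RDF terms: U (URIs), L (literals), V (variables), pairwise
   disjoint and infinite (each indexed by nat). ---------- *)
Inductive term := TU of nat | TL of nat | TV of nat.

Definition term_eqb (x y : term) : bool :=
  match x, y with
  | TU a, TU b => a == b
  | TL a, TL b => a == b
  | TV a, TV b => a == b
  | _, _ => false
  end.

Lemma term_eqP : Equality.axiom term_eqb.
Proof.
by case=> a [] b /=; try (by constructor); apply: (iffP eqP) => [->|[]].
Qed.

HB.instance Definition _ := hasDecEq.Build term term_eqP.

Definition is_uri (x : term) : bool := if x is TU _ then true else false.
Definition is_lit (x : term) : bool := if x is TL _ then true else false.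
Definition is_var (x : term) : bool := if x is TV _ then true else false.
Definition is_const (x : term) : bool := ~~ is_var x.
Definition tvar (x : term) : seq nat := if x is TV v then [:: v] else [::].

Definition tp := (term * term * term)%type.
Definition tsub (t : tp) : term := t.1.1.
Definition tpred (t : tp) : term := t.1.2.
Definition tobj (t : tp) : term := t.2.
Definition tterms (t : tp) : seq term := [:: tsub t; tpred t; tobj t].

(* triple: U x U x (U ∪ L);  graph: finite set (list) of triples *)
Definition is_triple (t : tp) : bool :=
  [&& is_uri (tsub t), is_uri (tpred t) & is_const (tobj t)].
Definition is_graph (G : seq tp) : bool := all is_triple G.
Definition is_tpattern (t : tp) : bool := ~~ is_lit (tsub t) && ~~ is_lit (tpred t).
Definition is_gpattern (P : seq tp) : bool := all is_tpattern P.

Definition var_occ (P : seq tp) : seq nat :=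
  flatten [seq flatten (map tvar (tterms t)) | t <- P].
Definition vars (P : seq tp) : seq nat := undup (var_occ P).
Definition sp_vars (P : seq tp) : seq nat :=
  undup (flatten [seq tvar (tsub t) ++ tvar (tpred t) | t <- P]).
Definition consts (P : seq tp) : seq term :=
  undup [seq x <- flatten (map tterms P) | is_const x].

Definition mapping := nat -> option term.
Definition is_mapping (m : mapping) : Prop :=
  forall v c, m v = Some c -> is_const c.
Definition app (m : mapping) (x : term) : term :=
  if x is TV v then odflt x (m v) else x.
Definition app3 (m : mapping) (t : tp) : tp :=
  (app m (tsub t), app m (tpred t), app m (tobj t)).
Definition appP (m : mapping) (P : seq tp) : seq tp := map (app3 m) P.

Definition sol (P G : seq tp) (m : mapping) : Prop :=
  is_mapping m /\ (forall v, isSome (m v) = (v \in vars P)) /\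
  {subset appP m P <= G}.

Definition is_rule (A C : seq tp) : Prop :=
  is_gpattern A /\ is_gpattern C /\ {subset vars C <= vars A} /\ uniq (var_occ C).

Definition in_rule_app (A C I : seq tp) (t : tp) : Prop :=
  t \in I \/ exists m, sol A I m /\ is_graph (appP m C) /\ t \in appP m C.

Definition schema := (seq tp * seq nat)%type.  (* ⟨S^G, S^Δ⟩ *)
Definition is_schema (S : schema) : Prop :=
  is_gpattern S.1 /\ uniq (var_occ S.1) /\
  {subset S.2 <= vars S.1} /\ {subset sp_vars S.1 <= S.2}.

Definition models (SD : seq nat) (tS t : tp) : Prop :=
  exists mu : mapping, is_mapping mu /\ app3 mu tS = t /\
    (forall v c, v \in SD -> mu v = Some c -> ~~ is_lit c).

Definition instance (S : schema) (I : seq tp) : Prop :=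
  is_graph I /\ forall t, t \in I -> exists2 tS, tS \in S.1 & models S.2 tS t.

Definition decP (P : Prop) : bool :=
  if excluded_middle_informative P then true else false.

Definition lamsub (lam : nat) (x : term) : term := if is_var x then TU lam else x.
Definition sandbox (lam : nat) (SG : seq tp) : seq tp :=
  [seq (lamsub lam (tsub t), lamsub lam (tpred t), lamsub lam (tobj t)) | t <- SG].
Definition rewritings (lam : nat) (t : tp) : seq tp :=
  flatten [seq [seq (ab, c) | ab <- [seq (a, b) | a <- [:: tsub t; TU lam],
                                                   b <- [:: tpred t; TU lam]]]
          | c <- [:: tobj t; TU lam]].
Fixpoint QA (lam : nat) (P : seq tp) : seq (seq tp) :=
  if P is t :: P' then [seq r :: q | r <- rewritings lam t, q <- QA lam P']
  else [:: [::]].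

Fixpoint allseqs (n : nat) (xs : seq term) : seq (seq term) :=
  if n is n'.+1 then [seq x :: s | x <- xs, s <- allseqs n' xs] else [:: [::]].
Definition assign (vs : seq nat) (vals : seq term) : mapping :=
  fun v => if v \in vs then Some (nth (TU 0) vals (index v vs)) else None.
Definition candidates (lam : nat) (SG A : seq tp) : seq mapping :=
  [seq assign (vars A) vals
  | vals <- allseqs (size (vars A)) (consts (sandbox lam SG))].
Definition in_QA_sol (lam : nat) (SG A : seq tp) (m : mapping) : bool :=
  has (fun q => all (fun t => app3 m t \in sandbox lam SG) q) (QA lam A).
Definition QA_sols (lam : nat) (SG A : seq tp) : seq mapping :=
  [seq m <- candidates lam SG A | in_QA_sol lam SG A m].

Definition Tset (lam : nat) (SG : seq tp) (SD : seq nat) (m : mapping) (tA : tp)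
  : seq tp :=
  [seq tS <- SG | has (fun tq => (app3 m tq \in sandbox lam SG) &&
                                 decP (models SD tS (app3 m tq)))
                      (rewritings lam tA)].
Definition nonDelta_var (SD : seq nat) (x : term) : bool :=
  if x is TV v then v \notin SD else false.

Definition discard_a lam SG SD (m : mapping) (tA : tp) : bool :=
  let l := app m (tobj tA) in
  is_lit l && ~~ has (fun tS => (tobj tS == l) || nonDelta_var SD (tobj tS))
                     (Tset lam SG SD m tA).
Definition delta_b lam SG SD (m : mapping) (tA : tp) : seq nat :=
  if tobj tA is TV v then
    if (m v == Some (TU lam)) &&
       ~~ has (fun tS => nonDelta_var SD (tobj tS)) (Tset lam SG SD m tA)
    then [:: v] else [::]
  else [::].
Definition DeltaM lam SG SD (A C : seq tp) (m : mapping) : seq nat :=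
  sp_vars A ++ sp_vars C ++ flatten [seq delta_b lam SG SD m tA | tA <- A].
Definition discarded lam SG SD (A C : seq tp) (m : mapping) : bool :=
  has (discard_a lam SG SD m) A ||
  has (fun v => if m v is Some (TL _) then true else false) (DeltaM lam SG SD A C m).
(* s^m, for the k-th mapping: fresh variable ?v* is TV (fr k v) *)
Definition subst_m (lam : nat) (fr : nat -> nat -> nat) (k : nat) (m : mapping)
  : mapping :=
  fun v => if m v == Some (TU lam) then Some (TV (fr k v)) else m v.

Definition score_step lam fr SG SD (A C : seq tp)
  (st : seq tp * seq nat) (km : nat * mapping) : seq tp * seq nat :=
  let: (k, m) := km in
  if discarded lam SG SD A C m then st else
  let s := subst_m lam fr k m in
  let G' := st.1 ++ appP s C in
  (G', st.2 ++ [seq v <- flatten [seq tvar (app s (TV v)) | v <- DeltaM lam SG SD A C m]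
               | v \in vars G']).

Definition score (lam : nat) (fr : nat -> nat -> nat) (S : schema) (A C : seq tp)
  : schema :=
  let ms := QA_sols lam S.1 A in
  foldl (score_step lam fr S.1 S.2 A C) (S.1, S.2) (zip (iota 0 (size ms)) ms).

(* Main.v *)
Require Import Defs.
From HB Require Import structures.
From mathcomp Require Import all_boot.
From Stdlib Require Import ClassicalEpsilon.
Set Implicit Arguments. Unset Strict Implicit. Unset Printing Implicit Defensive.

Lemma mem_tvar w x : (w \in tvar x) = (x == TV w).
Proof. case: x => //= n; rewrite inE /eq_op /=; by rewrite eq_sym. Qed.

Lemma mem_var_occ w P :
  (w \in var_occ P) = has (fun t => TV w \in tterms t) P.
Proof.
elim: P => //= t P IH; rewrite mem_cat IH /= !mem_cat !mem_tvar !inE.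
by rewrite !(eq_sym (TV w)) orbF orbA.
Qed.

Lemma mem_vars w P : (w \in vars P) = has (fun t => TV w \in tterms t) P.
Proof. by rewrite mem_undup mem_var_occ. Qed.

Lemma vars_cat w P Q : (w \in vars (P ++ Q)) = (w \in vars P) || (w \in vars Q).
Proof. by rewrite !mem_vars has_cat. Qed.

Lemma mem_varsP w P : reflect (exists2 t, t \in P & TV w \in tterms t) (w \in vars P).
Proof. rewrite mem_vars; exact: hasP. Qed.

Lemma mem_sp_vars w P : (w \in sp_vars P) =
  has (fun t => (tsub t == TV w) || (tpred t == TV w)) P.
Proof.
rewrite mem_undup; elim: P => //= t P IH.
by rewrite mem_cat IH mem_cat !mem_tvar.
Qed.

Lemma sp_vars_vars w P : w \in sp_vars P -> w \in vars P.
Proof.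
rewrite mem_sp_vars mem_vars => /hasP [t tP H]; apply/hasP; exists t => //.
by rewrite !inE; case/orP: H => /eqP ->; rewrite eqxx ?orbT.
Qed.

Lemma uniq_flatten (T : eqType) (s : seq (seq T)) x :
  uniq (flatten s) -> x \in s -> uniq x.
Proof.
elim: s => //= y s IH; rewrite cat_uniq => /and3P [uy _ us].
by rewrite inE => /orP [/eqP -> // | /(IH us)].
Qed.

Lemma uniq_tS (P : seq tp) t : uniq (var_occ P) -> t \in P ->
  uniq (flatten (map tvar (tterms t))).
Proof.
move=> U tP; apply: (uniq_flatten U); apply/mapP; by exists t.
Qed.

Lemma decP_true (Q : Prop) : Defs.decP Q -> Q.
Proof. rewrite /Defs.decP; by case: (excluded_middle_informative Q). Qed.
Lemma decP_intro (Q : Prop) : Q -> Defs.decP Q.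
Proof. rewrite /Defs.decP => q; by case: (excluded_middle_informative Q). Qed.

Definition alt lam (x y : term) := (y == x) || (y == TU lam).

Lemma rewritingsP lam t tq : tq \in rewritings lam t ->
  [/\ alt lam (tsub t) (tsub tq), alt lam (tpred t) (tpred tq) & alt lam (tobj t) (tobj tq)].
Proof.
case: tq => [[a b] c]; rewrite /rewritings /= !inE /alt /tsub /tpred /tobj /=.
by case/or4P => [||| /or4P [||| /orP[]//]] /eqP [-> -> ->]; rewrite !eqxx ?orbT.
Qed.

Lemma rewritings_intro lam t a b c :
  alt lam (tsub t) a -> alt lam (tpred t) b -> alt lam (tobj t) c ->
  (a, b, c) \in rewritings lam t.
Proof.
rewrite /rewritings /alt /= !inE.
by case/orP => /eqP ->; case/orP => /eqP ->; case/orP => /eqP ->; rewrite eqxx ?orbT.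
Qed.

Lemma QA_cons lam t A :
  QA lam (t :: A) = [seq r :: q | r <- rewritings lam t, q <- QA lam A].
Proof. by []. Qed.

Lemma QA_mem lam A q : q \in QA lam A ->
  forall tA, tA \in A -> exists2 tq, tq \in q & tq \in rewritings lam tA.
Proof.
elim: A q => [|t A IH] q; first by []. rewrite QA_cons => /allpairsPdep [r [q' [rR qQ ->]]] tA.
rewrite inE => /orP [/eqP -> | tAA]; first by exists r => //; exact: mem_head.
have [tq tqq tqr] := IH _ qQ _ tAA; exists tq => //; by rewrite inE tqq orbT.
Qed.

Lemma QA_intro lam A (f : tp -> tp) :
  (forall tA, tA \in A -> f tA \in rewritings lam tA) -> map f A \in QA lam A.
Proof.
elim: A => [_|t A IH H]; first by rewrite inE.
rewrite QA_cons map_cons; apply: allpairs_f_dep; first by apply: H; rewrite inE eqxx.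
by apply: IH => tA tAA; apply: H; rewrite inE tAA orbT.
Qed.

Lemma allseqsP n xs s : s \in allseqs n xs -> size s = n /\ all (mem xs) s.
Proof.
elim: n s => /= [|n IH] s; first by rewrite inE => /eqP ->.
case/allpairsPdep => [x [s' [xX sS ->]]].
by have [<- H] := IH _ sS; rewrite /= xX H.
Qed.

Lemma allseqs_intro n xs s : size s = n -> all (mem xs) s -> s \in allseqs n xs.
Proof.
elim: n s => [|n IH] [|x s] //=.
move=> [sz] /andP [xX sX]; apply: allpairs_f_dep => //; exact: IH.
Qed.

Definition pos_ok (SD : seq nat) (x y : term) : bool :=
  if x is TV w then is_const y && ((w \in SD) ==> ~~ is_lit y) else x == y.

Definition mu3 (tS t : tp) : mapping := fun w =>
  if tsub tS == TV w then Some (tsub t)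
  else if tpred tS == TV w then Some (tpred t)
  else if tobj tS == TV w then Some (tobj t) else None.

Lemma app_const (m : mapping) x : ~~ is_var x -> app m x = x.
Proof. by case: x. Qed.

Lemma uniq_cat_disj (T : eqType) (s1 s2 : seq T) n :
  uniq (s1 ++ s2) -> n \in s1 -> n \in s2 -> False.
Proof.
rewrite cat_uniq => /and3P [_ /hasPn H _] n1 n2.
by move: (H _ n2); rewrite n1.
Qed.

Lemma uniq3 a b c n : uniq (tvar a ++ tvar b ++ tvar c ++ [::]) ->
  [/\ (a == TV n) && (b == TV n) = false, (a == TV n) && (c == TV n) = false
    & (b == TV n) && (c == TV n) = false].
Proof.
move=> U; have U2 : uniq (tvar b ++ tvar c ++ [::]) by move: U; rewrite cat_uniq => /and3P[].
split; apply/negbTE/negP => /andP [/eqP Ea /eqP Eb].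
- apply: (@uniq_cat_disj _ _ _ n U); first by rewrite Ea mem_tvar.
  by rewrite mem_cat Eb !mem_tvar eqxx.
- apply: (@uniq_cat_disj _ _ _ n U); first by rewrite Ea mem_tvar.
  by rewrite !mem_cat Eb !mem_tvar eqxx orbT.
- apply: (@uniq_cat_disj _ _ _ n U2); first by rewrite Ea mem_tvar.
  by rewrite !mem_cat Eb !mem_tvar eqxx.
Qed.

Lemma models_pos SD tS t : uniq (flatten (map tvar (tterms tS))) ->
  pos_ok SD (tsub tS) (tsub t) -> pos_ok SD (tpred tS) (tpred t) ->
  pos_ok SD (tobj tS) (tobj t) -> models SD tS t.
Proof.
case: tS => [[a b] c]; case: t => [[x y] z]; rewrite /tsub /tpred /tobj /=.
move=> U Ha Hb Hc; have U3 n := @uniq3 a b c n U; exists (mu3 (a, b, c) (x, y, z)); split; [|split].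
- move=> w d; rewrite /mu3 /tsub /tpred /tobj /=.
  case: ifP => [/eqP E [<-]|_]; first by move: Ha; rewrite E => /andP[].
  case: ifP => [/eqP E [<-]|_]; first by move: Hb; rewrite E => /andP[].
  case: ifP => [/eqP E [<-]|_ //]; by move: Hc; rewrite E => /andP[].
- rewrite /app3 /tsub /tpred /tobj /= /mu3 /tsub /tpred /tobj /=.
  f_equal; [f_equal|].
  + by case: a Ha {U U3} => [n|n|n] /= => [/eqP|/eqP|_]; rewrite ?eqxx.
  + case: b Hb U3 {U} => [n|n|n] /= => [/eqP //|/eqP //|_] U3.
    have [H1 _ _] := U3 n; move: H1; rewrite eqxx andbT => ->.
    by [].
  + case: c Hc U3 {U} => [n|n|n] /= => [/eqP //|/eqP //|_] U3.
    have [_ H2 H3] := U3 n; move: H2 H3; rewrite eqxx !andbT => -> ->.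
    by [].
- move=> w d wD; rewrite /mu3 /tsub /tpred /tobj /=.
  case: ifP => [/eqP E [<-]|_]; first by move: Ha; rewrite E /= wD => /andP[].
  case: ifP => [/eqP E [<-]|_]; first by move: Hb; rewrite E /= wD => /andP[].
  case: ifP => [/eqP E [<-]|_ //]; by move: Hc; rewrite E /= wD => /andP[].
Qed.

Definition pos_inv (SD : seq nat) (x y : term) : Prop :=
  (~~ is_var x -> x = y) /\ (forall w, x = TV w -> w \in SD -> ~~ is_lit y).

Lemma pos_inv_app SD (mu : mapping) x :
  (forall v c, v \in SD -> mu v = Some c -> ~~ is_lit c) -> pos_inv SD x (app mu x).
Proof.
move=> H; split; first by move=> /app_const ->.
move=> w -> wD /=; case E: (mu w) => [d|] //=; exact: H E.
Qed.

Lemma models_inv SD tS t : models SD tS t ->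
  [/\ pos_inv SD (tsub tS) (tsub t), pos_inv SD (tpred tS) (tpred t) &
      pos_inv SD (tobj tS) (tobj t)].
Proof.
move=> [mu [_ [<- H]]]; split; exact: pos_inv_app.
Qed.

Lemma foldG lam fr SG SD A C (l : seq (nat * mapping)) st t :
  t \in (foldl (score_step lam fr SG SD A C) st l).1 <->
  t \in st.1 \/ exists k m, List.In (k, m) l /\ ~~ discarded lam SG SD A C m /\
                  t \in Defs.appP (subst_m lam fr k m) C.
Proof.
elim: l st => [|[k m] l IH] st /=.
  by split => [->|[//|[k [m [[]]]]]]; left.
rewrite IH; split.
- case=> [|[k' [m' [H1 [H2 H3]]]]]; last by right; exists k', m'; split => //; right.
  rewrite /score_step; case: ifP => D; first by left.
  rewrite /= mem_cat => /orP [->|H]; first by left.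
  by right; exists k, m; split => //; [left | rewrite D].
- case=> [H|[k' [m' [[E|H1] [H2 H3]]]]].
  + by left; rewrite /score_step; case: ifP => //= _; rewrite mem_cat H.
  + case: E => <- <- in H2 H3; left; rewrite /score_step (negbTE H2) /= mem_cat H3 orbT.
    by [].
  + by right; exists k', m'.
Qed.

Lemma foldD_mono lam fr SG SD A C (l : seq (nat * mapping)) st w :
  w \in st.2 -> w \in (foldl (score_step lam fr SG SD A C) st l).2.
Proof.
elim: l st => [|[k m] l IH] st //= H; apply: IH.
by rewrite /score_step; case: ifP => //= _; rewrite mem_cat H.
Qed.

Lemma foldD_in lam fr SG SD A C (l : seq (nat * mapping)) st k m u w :
  List.In (k, m) l -> ~~ discarded lam SG SD A C m -> u \in DeltaM lam SG SD A C m ->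
  w \in tvar (app (subst_m lam fr k m) (TV u)) ->
  w \in vars (Defs.appP (subst_m lam fr k m) C) ->
  w \in (foldl (score_step lam fr SG SD A C) st l).2.
Proof.
elim: l st => [|[k' m'] l IH] st //= [E|H] ND uD wt wv; last exact: IH.
case: E => ? ?; subst k' m'; apply: foldD_mono.
rewrite /score_step (negbTE ND) /= mem_cat; apply/orP; right.
rewrite mem_filter vars_cat wv orbT /=.
apply/flattenP; exists (tvar (app (subst_m lam fr k m) (TV u))) => //.
by apply/mapP; exists u.
Qed.

Lemma foldD_out lam fr SG SD A C (l : seq (nat * mapping)) st w :
  w \in (foldl (score_step lam fr SG SD A C) st l).2 ->
  w \in st.2 \/ exists k m u, [/\ List.In (k, m) l, ~~ discarded lam SG SD A C m,
      u \in DeltaM lam SG SD A C m & w \in tvar (app (subst_m lam fr k m) (TV u))].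
Proof.
elim: l st => [|[k m] l IH] st /=; first by left.
move/IH => [|[k' [m' [u [H1 H2 H3 H4]]]]]; last first.
  by right; exists k', m', u; split => //; right.
rewrite /score_step; case: ifP => D; first by left.
rewrite /= mem_cat => /orP [->|]; first by left.
rewrite mem_filter => /andP [_ /flattenP [s /mapP [u uD ->] ws]].
by right; exists k, m, u; split => //; [left | rewrite D].
Qed.

Lemma zip_iota_key (ms : seq mapping) s k m :
  List.In (k, m) (zip (iota s (size ms)) ms) -> s <= k.
Proof.
elim: ms s => [|x ms IH] s //= [[<- _] //|H].
by apply: ltnW; apply: IH H.
Qed.

Lemma zip_iota_uniq (ms : seq mapping) s k m1 m2 :
  List.In (k, m1) (zip (iota s (size ms)) ms) ->
  List.In (k, m2) (zip (iota s (size ms)) ms) -> m1 = m2.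
Proof.
elim: ms s => [|x ms IH] s //= [[E1 <-]|H1] [[E2 <-]|H2] //.
- by move: (zip_iota_key H2); rewrite -E1 ltnn.
- by move: (zip_iota_key H1); rewrite -E2 ltnn.
- exact: IH H1 H2.
Qed.

Lemma zip_iota_in (ms : seq mapping) s k m :
  List.In (k, m) (zip (iota s (size ms)) ms) -> List.In m ms.
Proof.
elim: ms s => [|x ms IH] s //= [[_ <-]|H]; [by left | right; exact: IH H].
Qed.

Lemma zip_iota_ex (ms : seq mapping) s m :
  List.In m ms -> exists k, List.In (k, m) (zip (iota s (size ms)) ms).
Proof.
elim: ms s => [|x ms IH] s //= [<-|H]; first by exists s; left.
by have [k Hk] := IH s.+1 H; exists k; right.
Qed.

Lemma In_map_seq (T U : Type) (f : T -> U) (s : seq T) y :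
  List.In y (map f s) <-> exists x, List.In x s /\ y = f x.
Proof.
elim: s => [|x s IH] /=; first by split => // [[x []]].
split.
- case=> [<-|H]; first by exists x; split => //; left.
  by have [z [H1 ->]] := (proj1 IH) H; exists z; split => //; right.
- case=> [z [[<-|H] E]]; subst y; first by left.
  by right; apply: (proj2 IH); exists z.
Qed.

Lemma In_filter_seq (T : Type) (p : pred T) (s : seq T) y :
  List.In y (filter p s) <-> List.In y s /\ p y.
Proof.
elim: s => [|x s IH] /=; first by split => // [[]].
case: ifP => px /=.
  split.
  - case=> [<-|H]; first by split => //; left.
    by have [H1 H2] := (proj1 IH) H; split => //; right.
  - case=> [[<-|H] py]; first by left.
    by right; apply: (proj2 IH).
split.
- by move=> H; have [H1 H2] := (proj1 IH) H; split => //; right.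
- case=> [[E|H] py]; last by apply: (proj2 IH).
  by rewrite -E px in py.
Qed.

Lemma In_mem (T : eqType) (s : seq T) x : x \in s -> List.In x s.
Proof.
elim: s => //= y s IH; rewrite inE => /orP [/eqP ->|/IH]; by [left | right].
Qed.

Lemma mem_In (T : eqType) (s : seq T) x : List.In x s -> x \in s.
Proof. elim: s => //= y s IH [->|/IH]; rewrite inE ?eqxx // => ->; exact: orbT. Qed.

Lemma mem_consts x P : (x \in consts P) = is_const x && (x \in flatten (map tterms P)).
Proof. by rewrite mem_undup mem_filter. Qed.

Lemma assign_map (f : nat -> term) vs v : v \in vs ->
  assign vs (map f vs) v = Some (f v).
Proof.
move=> vV; rewrite /assign vV (nth_map 0) ?index_mem // nth_index //.
Qed.

Lemma QA_sols_inv lam SG A m : List.In m (QA_sols lam SG A) ->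
  [/\ forall v, v \in vars A -> exists2 x, m v = Some x & x \in consts (sandbox lam SG),
      forall v, v \notin vars A -> m v = None & in_QA_sol lam SG A m].
Proof.
rewrite /QA_sols /candidates => /In_filter_seq [/In_map_seq [vals [vI ->]] Q].
have [sz al] := allseqsP (mem_In vI).
split => // v; rewrite /assign; last by move/negbTE ->.
move=> vA; rewrite vA; eexists; first by [].
apply: (allP al); apply: mem_nth; by rewrite sz index_mem.
Qed.

Lemma QA_sols_intro lam SG A (f : nat -> term) :
  (forall v, v \in vars A -> f v \in consts (sandbox lam SG)) ->
  in_QA_sol lam SG A (assign (vars A) (map f (vars A))) ->
  List.In (assign (vars A) (map f (vars A))) (QA_sols lam SG A).
Proof.
move=> H Q; rewrite /QA_sols /candidates; apply/In_filter_seq; split => //.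
apply/In_map_seq; exists (map f (vars A)); split => //; apply: In_mem.
apply: allseqs_intro; first by rewrite size_map.
by apply/allP => x /mapP [v vA ->]; apply: H.
Qed.

Definition lamsub3 lam (t : tp) : tp :=
  (lamsub lam (tsub t), lamsub lam (tpred t), lamsub lam (tobj t)).

Lemma sandboxE lam SG : sandbox lam SG = map (lamsub3 lam) SG.
Proof. by []. Qed.

Lemma models_lamsub lam SD tS : uniq (flatten (map tvar (tterms tS))) ->
  models SD tS (lamsub3 lam tS).
Proof.
move=> U; apply: models_pos => //; case: tS {U} => [[a b] c];
rewrite /lamsub3 /tsub /tpred /tobj /=.
- by case: a => //= n; rewrite ?eqxx ?implybT.
- by case: b => //= n; rewrite ?eqxx ?implybT.
- by case: c => //= n; rewrite ?eqxx ?implybT.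
Qed.

Definition mp (vs : seq nat) (f : nat -> term) : mapping :=
  fun v => if v \in vs then Some (f v) else None.

Lemma app_mp vs f v : v \in vs -> app (mp vs f) (TV v) = f v.
Proof. by move=> H; rewrite /= /mp H. Qed.

Lemma fresh_in lam P t : TU lam \notin flatten (map tterms P) -> t \in P ->
  TU lam \notin tterms t.
Proof.
move=> H tP; apply/negP => L; move/negP: H; apply; apply/flatten_mapP; by exists t.
Qed.

Lemma tterms_vars P t v : t \in P -> TV v \in tterms t -> v \in vars P.
Proof. by move=> tP H; apply/mem_varsP; exists t. Qed.

Lemma pos_gen lam SD (y p val : term) :
  pos_inv SD y p -> y != TU lam -> (p = TU lam \/ p = val) -> is_const val ->
  (p = TU lam -> forall w, y = TV w -> w \in SD -> ~~ is_lit val) ->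
  pos_ok SD y val.
Proof.
move=> [H1 H2] yl Hp cv H3.
case: y H1 H2 yl H3 => [n|n|n] H1 H2 yl H3 /=; last first.
  rewrite cv /=; apply/implyP => nD; case: Hp => Hp; first exact: H3.
  by rewrite -Hp; apply: H2.
all: have E := H1 isT; case: Hp => Hp; last by rewrite E Hp.
all: by move: yl; rewrite E Hp eqxx.
Qed.

Lemma p_alt lam (m m' : mapping) x tq :
  alt lam x tq ->
  (forall v, x = TV v -> exists2 y, m v = Some y &
                 (y != TU lam -> m' v = Some y)) ->
  app m tq = TU lam \/ app m tq = app m' x.
Proof.
rewrite /alt => /orP [/eqP ->|/eqP ->]; last by left.
case: x => [n|n|n] H; try by right.
have [y E1 E2] := H n erefl; rewrite /= E1 /=.
case: (eqVneq y (TU lam)) => [->|ne]; first by left.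
by right; rewrite (E2 ne).
Qed.

Lemma in_Tset lam SG SD m tA tS :
  tS \in Tset lam SG SD m tA ->
  [/\ tS \in SG & exists2 tq, tq \in rewritings lam tA &
      models SD tS (app3 m tq)].
Proof.
rewrite mem_filter => /andP [/hasP [tq tqR /andP [_ /decP_true M]] tSG].
by split => //; exists tq.
Qed.

Lemma Tset_nonempty lam SG SD A m tA :
  uniq (var_occ SG) -> in_QA_sol lam SG A m -> tA \in A ->
  exists tS, tS \in Tset lam SG SD m tA.
Proof.
move=> U /hasP [q qQ /allP al] tAA.
have [tq tqq tqR] := QA_mem qQ tAA.
have := al _ tqq; rewrite sandboxE => /mapP [tS tSG E].
exists tS; rewrite mem_filter tSG andbT; apply/hasP; exists tq => //.
rewrite E sandboxE map_f //=; apply: decP_intro; apply: models_lamsub.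
exact: uniq_tS U tSG.
Qed.

Lemma sp_in_DeltaM lam SG SD A C m tA v : tA \in A ->
  (tsub tA = TV v \/ tpred tA = TV v) -> v \in DeltaM lam SG SD A C m.
Proof.
move=> tAA H; rewrite /DeltaM mem_cat mem_sp_vars; apply/orP; left.
by apply/hasP; exists tA => //; case: H => ->; rewrite eqxx ?orbT.
Qed.

Lemma spC_in_DeltaM lam SG SD A C m c v : c \in C ->
  (tsub c = TV v \/ tpred c = TV v) -> v \in DeltaM lam SG SD A C m.
Proof.
move=> cC H; rewrite /DeltaM !mem_cat !mem_sp_vars; apply/orP; right; apply/orP; left.
by apply/hasP; exists c => //; case: H => ->; rewrite eqxx ?orbT.
Qed.

Lemma delta_b_in lam SG SD A C m tA v : tA \in A ->
  v \in delta_b lam SG SD m tA -> v \in DeltaM lam SG SD A C m.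
Proof.
move=> tAA H; rewrite /DeltaM !mem_cat; apply/orP; right; apply/orP; right.
by apply/flatten_mapP; exists tA.
Qed.

Lemma in_tterms_sub t : tsub t \in tterms t.
Proof. by rewrite inE eqxx. Qed.
Lemma in_tterms_pred t : tpred t \in tterms t.
Proof. by rewrite !inE eqxx orbT. Qed.
Lemma in_tterms_obj t : tobj t \in tterms t.
Proof. by rewrite !inE eqxx !orbT. Qed.

Lemma fresh3 lam t : TU lam \notin tterms t ->
  [/\ tsub t != TU lam, tpred t != TU lam & tobj t != TU lam].
Proof.
rewrite !inE !negb_or => /and3P [H1 H2 H3].
by split; rewrite eq_sym.
Qed.

Lemma uri_const x : is_uri x -> is_const x.
Proof. by case: x. Qed.

Lemma sub_added SG SD A C lam fr k m c (mu : mapping) t (D' : seq nat) :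
  is_schema (SG, SD) -> is_rule A C ->
  TU lam \notin flatten (map tterms (SG ++ A ++ C)) ->
  List.In m (QA_sols lam SG A) ->
  ~~ discarded lam SG SD A C m ->
  c \in C ->
  (forall v, v \in vars A -> m v = Some (TU lam) -> v \in DeltaM lam SG SD A C m ->
      v \in vars [:: c] -> fr k v \in D') ->
  is_mapping mu ->
  (forall v d, v \in D' -> mu v = Some d -> ~~ is_lit d) ->
  app3 mu (app3 (subst_m lam fr k m) c) = t ->
  is_triple t ->
  exists I, instance (SG, SD) I /\ in_rule_app A C I t.
Proof.
move=> [/= SGp [SGu [SDv SDsp]]] [Ap [Cp [CA Cu]]] Fr mQ ND cC HD muM muD Et Tt.
have [Mv Mn Q] := QA_sols_inv mQ.
pose xv v := if v \in vars [:: c] then odflt (TU 0) (mu (fr k v)) else TU 0.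
pose val v := if m v == Some (TU lam) then xv v else odflt (TU 0) (m v).
pose m' := mp (vars A) val.
have xvc v : is_const (xv v).
  rewrite /xv; case: ifP => // _; case E: (mu (fr k v)) => [d|] //=; exact: muM E.
have valc v : v \in vars A -> is_const (val v).
  move=> vA; rewrite /val; case: ifP => _; first exact: xvc.
  have [x -> cx] := Mv v vA; by move: cx; rewrite mem_consts => /andP [].
move: ND; rewrite /discarded negb_or => /andP [/hasPn ND1 /hasPn ND2].
have F3 v : v \in vars A -> v \in DeltaM lam SG SD A C m -> is_uri (val v).
  move=> vA vD; rewrite /val; case: eqP => [E|NE].
  - rewrite /xv; case: ifP => vc //; case Em: (mu (fr k v)) => [d|] //=.
    have := muD _ _ (HD v vA E vD vc) Em; have := muM _ _ Em; by case: d {Em}.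
  - have [x Ex cx] := Mv v vA; rewrite Ex /=.
    have := ND2 v vD; rewrite Ex; move: cx; rewrite mem_consts => /andP[]; by case: x {Ex NE}.
have Flit v : v \in vars A -> m v = Some (TU lam) -> is_lit (val v) ->
    v \notin DeltaM lam SG SD A C m.
  move=> vA E; rewrite /val E eqxx /xv; case: ifP => vc //=.
  case Em: (mu (fr k v)) => [d|] //= dl; apply/negP => vD.
  by have := muD _ _ (HD v vA E vD vc) Em; rewrite dl.
have Hm v : v \in vars A -> exists2 y, m v = Some y & (y != TU lam -> m' v = Some y).
  move=> vA; have [y Ey _] := Mv v vA; exists y => // ne.
  rewrite /m' /mp vA /val Ey; case: eqP => // [[E]]; by rewrite E eqxx in ne.
have appm' x : (forall v, x = TV v -> v \in vars A) ->
    app m' x = if x is TV v then val v else x.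
  case: x => // v H; rewrite app_mp //; exact: H.
have conc tA : tA \in A -> [/\ is_uri (app m' (tsub tA)), is_uri (app m' (tpred tA))
                              & is_const (app m' (tobj tA))].
  move=> tAA; have /andP [ps pp] := allP Ap _ tAA.
  have vA v : TV v \in tterms tA -> v \in vars A by apply: tterms_vars.
  split.
  - case Es: (tsub tA) ps => [n|n|n] //= _; rewrite /m' /mp.
    have nA : n \in vars A by apply: vA; rewrite -Es in_tterms_sub.
    by rewrite nA /=; apply: F3 => //; apply: (sp_in_DeltaM _ _ _ _ _ tAA); left.
  - case Es: (tpred tA) pp => [n|n|n] //= _; rewrite /m' /mp.
    have nA : n \in vars A by apply: vA; rewrite -Es in_tterms_pred.
    by rewrite nA /=; apply: F3 => //; apply: (sp_in_DeltaM _ _ _ _ _ tAA); right.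
  - case Es: (tobj tA) => [n|n|n] //=; rewrite /m' /mp.
    have nA : n \in vars A by apply: vA; rewrite -Es in_tterms_obj.
    by rewrite nA /=; apply: valc.
have pick tA : tA \in A -> exists2 tS, tS \in SG & models SD tS (app3 m' tA).
  move=> tAA.
  have vA v : TV v \in tterms tA -> v \in vars A by apply: tterms_vars.
  have Rex : exists tS, tS \in Tset lam SG SD m tA /\
      (is_lit (app m' (tobj tA)) ->
         (tobj tS == app m' (tobj tA)) || nonDelta_var SD (tobj tS)).
    case: (boolP (is_lit (app m' (tobj tA)))) => L; last first.
      by have [tS H] := Tset_nonempty SD SGu Q tAA; exists tS; split.
    case: (boolP (is_lit (app m (tobj tA)))) => L2.
    - have E : app m (tobj tA) = app m' (tobj tA).
        case Eo: (tobj tA) L L2 => [n|n|n] //=.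
        have nA : n \in vars A by apply: vA; rewrite -Eo in_tterms_obj.
        rewrite /m' /mp nA /= /val; have [x Ex _] := Mv n nA; rewrite Ex /=.
        by case: eqP => // [[->]].
      have := ND1 tA tAA; rewrite /discard_a -E L2 /= negbK => /hasP [tS tST H].
      by exists tS; split => // _; rewrite -E.
    - case Eo: (tobj tA) L L2 => [n|n|n] //=.
      have nA : n \in vars A by apply: vA; rewrite -Eo in_tterms_obj.
      rewrite /m' /mp nA /= => L L2; have [x Ex _] := Mv n nA.
      have Ex' : m n = Some (TU lam).
        rewrite Ex; case: (eqVneq x (TU lam)) => [->//|ne].
        move: L L2; rewrite /val Ex /=; case: eqP => [[E]|_]; first by rewrite E eqxx in ne.
        by move=> /= ->.
      have nD := Flit n nA Ex' L.
      case: (boolP (has (fun tS => nonDelta_var SD (tobj tS)) (Tset lam SG SD m tA))).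
        by move=> /hasP [tS tST H]; exists tS; split => // _; rewrite H orbT.
      move=> NH; case/negP: nD; apply: (@delta_b_in lam SG SD A C m tA n tAA).
      by rewrite /delta_b Eo Ex' eqxx NH inE.
  have [tS [tST R]] := Rex; have [tSG [tq tqR M]] := in_Tset tST.
  have [Ha Hb Hc] := rewritingsP tqR; have [Ia Ib Ic] := models_inv M.
  have tSF : tS \in SG ++ A ++ C by rewrite mem_cat tSG.
  have [fa fb fc] := fresh3 (fresh_in Fr tSF).
  have [ca cb cc] := conc tA tAA.
  have Hx x : x \in tterms tA -> forall v, x = TV v ->
      exists2 y, m v = Some y & (y != TU lam -> m' v = Some y).
    by move=> xT v Ev; apply: Hm; apply: vA; rewrite -Ev.
  exists tS => //; apply: models_pos; first exact: uniq_tS SGu tSG.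
  + apply: (pos_gen Ia fa (p_alt Ha (Hx _ (in_tterms_sub tA)))).
      by case: (app m' (tsub tA)) ca.
    by move=> _ w _ _; case: (app m' (tsub tA)) ca.
  + apply: (pos_gen Ib fb (p_alt Hb (Hx _ (in_tterms_pred tA)))).
      by case: (app m' (tpred tA)) cb.
    by move=> _ w _ _; case: (app m' (tpred tA)) cb.
  + apply: (pos_gen Ic fc (p_alt Hc (Hx _ (in_tterms_obj tA)))) => // _ w Ew wD.
    apply/negP => Lv; move: (R Lv); rewrite Ew /= wD orbF.
    by case: (app m' (tobj tA)) Lv.
exists (map (app3 m') A); split.
  split.
  - apply/allP => t0 /mapP [tA tAA ->]; have [ca cb cc] := conc tA tAA.
    by rewrite /is_triple ca cb cc.
  - move=> t0 /mapP [tA tAA ->]; exact: pick.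
right; exists m'; split; [split; [|split]|split].
- move=> v d; rewrite /m' /mp; case: ifP => // vA [<-]; exact: valc.
- by move=> v; rewrite /m' /mp; case: ifP.
- by [].
- apply/allP => c0 /mapP [c' c'C ->]; have /andP [ps pp] := allP Cp _ c'C.
  have vA v : TV v \in tterms c' -> v \in vars A.
    by move=> H; apply: CA; apply: tterms_vars H.
  suff [ca cb cc] : [/\ is_uri (app m' (tsub c')), is_uri (app m' (tpred c'))
                              & is_const (app m' (tobj c'))].
    by rewrite /is_triple ca cb cc.
  split.
  + case Es: (tsub c') ps => [n|n|n] //= _; rewrite /m' /mp.
    have nA : n \in vars A by apply: vA; rewrite -Es in_tterms_sub.
    by rewrite nA /=; apply: F3 => //; apply: (spC_in_DeltaM _ _ _ _ _ c'C); left.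
  + case Es: (tpred c') pp => [n|n|n] //= _; rewrite /m' /mp.
    have nA : n \in vars A by apply: vA; rewrite -Es in_tterms_pred.
    by rewrite nA /=; apply: F3 => //; apply: (spC_in_DeltaM _ _ _ _ _ c'C); right.
  + case Es: (tobj c') => [n|n|n] //=; rewrite /m' /mp.
    have nA : n \in vars A by apply: vA; rewrite -Es in_tterms_obj.
    by rewrite nA /=; apply: valc.
- have term x : (forall v, x = TV v -> v \in vars [:: c] /\ v \in vars A) ->
      is_const (app mu (app (subst_m lam fr k m) x)) ->
      app m' x = app mu (app (subst_m lam fr k m) x).
    case: x => [n|n|n] //= H; have [nc nA] := H n erefl.
    rewrite /m' /mp nA /= /val /subst_m.
    case: eqP => [E|NE].
    + by rewrite /xv nc /=; case: (mu (fr k n)).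
    + have [y Ey cy] := Mv n nA; rewrite Ey /= => _.
      move: cy; rewrite mem_consts => /andP [cy _]; by rewrite app_const.
  have vc x : x \in tterms c -> forall v, x = TV v -> v \in vars [:: c] /\ v \in vars A.
    move=> xT v Ev; rewrite Ev in xT; split; first by apply: tterms_vars xT; rewrite inE.
    by apply: CA; apply: tterms_vars xT.
  move: Tt; rewrite -Et => /and3P [T1 T2 T3].
  apply/mapP; exists c => //; rewrite /app3; f_equal; [f_equal|].
  + symmetry; apply: term; [exact: vc (in_tterms_sub c) | exact: uri_const T1].
  + symmetry; apply: term; [exact: vc (in_tterms_pred c) | exact: uri_const T2].
  + symmetry; apply: term; [exact: vc (in_tterms_obj c) | by []].
Qed.

Lemma DeltaM_vars lam SG SD A C m u : {subset vars C <= vars A} ->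
  u \in DeltaM lam SG SD A C m -> u \in vars A.
Proof.
move=> CA; rewrite /DeltaM !mem_cat => /or3P [/sp_vars_vars //|/sp_vars_vars/CA //|].
case/flatten_mapP => tA tAA; rewrite /delta_b.
case Eo: (tobj tA) => [n|n|n] //; case: ifP => // _; rewrite inE => /eqP ->.
by apply: tterms_vars tAA _; rewrite -Eo in_tterms_obj.
Qed.

Lemma L_tvar lam fr SG SD A C j mj u w : {subset vars C <= vars A} ->
  List.In mj (QA_sols lam SG A) -> u \in DeltaM lam SG SD A C mj ->
  w \in tvar (app (subst_m lam fr j mj) (TV u)) ->
  mj u = Some (TU lam) /\ w = fr j u.
Proof.
move=> CA mQ uD; have uA := DeltaM_vars CA uD.
have [Mv _ _] := QA_sols_inv mQ; have [x Ex cx] := Mv u uA.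
rewrite /= /subst_m Ex; case: eqP => [[->]|_] /=; first by rewrite inE => /eqP ->.
by move: cx; rewrite mem_consts => /andP []; case: x {Ex}.
Qed.

Lemma models_restrict SD SD' tS t :
  models SD tS t ->
  (forall w, w \in SD' -> TV w \in tterms tS -> w \in SD) ->
  models SD' tS t.
Proof.
move=> [mu [muM [Et muD]]] H.
exists (fun w => if TV w \in tterms tS then mu w else None); split; [|split].
- by move=> v c; case: ifP => // _; apply: muM.
- rewrite -Et /app3; have E x : x \in tterms tS ->
      app (fun w => if TV w \in tterms tS then mu w else None) x = app mu x.
    by case: x => //= n ->.
  by rewrite !E ?in_tterms_sub ?in_tterms_pred ?in_tterms_obj.
- move=> v c vD; case: ifP => // vT; apply: muD; exact: H.
Qed.

Definition chs (SG : seq tp) SD (m0 : mapping) (tA : tp) : tp :=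
  epsilon (inhabits (TU 0, TU 0, TU 0))
    (fun tS => tS \in SG /\ models SD tS (app3 m0 tA)).

Lemma sup_added SG SD A C lam fr I m0 c :
  is_schema (SG, SD) -> is_rule A C ->
  TU lam \notin flatten (map tterms (SG ++ A ++ C)) ->
  (forall k v k' v', fr k v = fr k' v' -> k = k' /\ v = v') ->
  (forall k v, fr k v \notin vars (SG ++ A ++ C)) ->
  instance (SG, SD) I -> sol A I m0 -> is_graph (Defs.appP m0 C) -> c \in C ->
  exists2 tS, tS \in (score lam fr (SG, SD) A C).1 &
              models (score lam fr (SG, SD) A C).2 tS (app3 m0 c).
Proof.
move=> [/= SGp [SGu [SDv SDsp]]] [Ap [Cp [CA Cu]]] Fr frI frF [Ig Im] [m0M [m0D m0I]] m0C cC.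
pose ch := chs SG SD m0.
have chP tA : tA \in A -> ch tA \in SG /\ models SD (ch tA) (app3 m0 tA).
  move=> tAA; apply: (epsilon_spec (inhabits (TU 0, TU 0, TU 0)) (fun tS => tS \in SG /\ models SD tS (app3 m0 tA))).
  have [tS tSG M] := Im _ (m0I _ (map_f _ tAA)); by exists tS.
have m0v v : v \in vars A -> exists2 d, m0 v = Some d & is_const d.
  move=> vA; move: (m0D v); rewrite vA; case E: (m0 v) => [d|] // _.
  by exists d => //; apply: m0M E.
pose val0 v := odflt (TU 0) (m0 v).
pose Pv v := has (fun tA => [|| (tsub tA == TV v) && ~~ is_var (tsub (ch tA)),
                               (tpred tA == TV v) && ~~ is_var (tpred (ch tA)) |
                               (tobj tA == TV v) && ~~ is_var (tobj (ch tA))]) A.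
pose mval v := if Pv v then val0 v else TU lam.
pose m := assign (vars A) (map mval (vars A)).
have mE v : v \in vars A -> m v = Some (mval v) by move=> vA; rewrite /m assign_map.
have vA tA v : tA \in A -> TV v \in tterms tA -> v \in vars A by move=> tAA H; exact: tterms_vars tAA H.
have chF tA : tA \in A -> TU lam \notin tterms (ch tA).
  move=> tAA; apply: (fresh_in Fr); by rewrite mem_cat (chP _ tAA).1.
have pos1 tA x y : tA \in A -> y \in tterms (ch tA) -> pos_inv SD y (app m0 x) ->
    forall v, x = TV v -> v \in vars A -> ~~ is_var y -> y = val0 v /\ y != TU lam.
  move=> tAA yT [H1 _] v Ex vA' ny; have E := H1 ny; rewrite Ex /= in E.
  have [d Ed _] := m0v v vA'; rewrite Ed /= in E; rewrite /val0 Ed E; split => //.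
  by apply/eqP => El; move: (chF tA tAA); rewrite -El -E yT.
have PvNL v : v \in vars A -> Pv v -> val0 v != TU lam.
  move=> vA' /hasP [tA tAA]; have [Ia Ib Ic] := models_inv (chP tA tAA).2.
  case/or3P => /andP [/eqP Ex ny].
  - by have [<- ->] := pos1 tA _ _ tAA (in_tterms_sub _) Ia v Ex vA' ny.
  - by have [<- ->] := pos1 tA _ _ tAA (in_tterms_pred _) Ib v Ex vA' ny.
  - by have [<- ->] := pos1 tA _ _ tAA (in_tterms_obj _) Ic v Ex vA' ny.
have pos3 tA x y : tA \in A -> x \in tterms tA -> y \in tterms (ch tA) ->
    pos_inv SD y (app m0 x) ->
    (forall v, x = TV v -> ~~ is_var y -> Pv v) ->
    app m (if is_var y then TU lam else x) = lamsub lam y.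
  move=> tAA xT yT Hi W; case: (boolP (is_var y)) => ny; first by clear yT Hi W; case: y ny.
  case Ex: x xT => [n|n|n] xT.
  - by have [E _] := Hi; have := E ny; rewrite Ex /= => ->.
  - by have [E _] := Hi; have := E ny; rewrite Ex /= => ->.
  - have nA := vA _ _ tAA xT.
    have [E _] := pos1 tA _ _ tAA yT Hi n Ex nA ny.
    by rewrite /= mE //= /mval (W n Ex ny) -E; clear E Hi W yT; case: y ny.
pose tq tA : tp := (if is_var (tsub (ch tA)) then TU lam else tsub tA,
                   if is_var (tpred (ch tA)) then TU lam else tpred tA,
                   if is_var (tobj (ch tA)) then TU lam else tobj tA).
have K3 tA : tA \in A -> app3 m (tq tA) = lamsub3 lam (ch tA).
  move=> tAA; have [Ia Ib Ic] := models_inv (chP tA tAA).2.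
  rewrite /app3 /lamsub3; f_equal; [f_equal|].
  - apply: (pos3 tA _ _ tAA (in_tterms_sub _) (in_tterms_sub _) Ia) => v Ev ny.
    by apply/hasP; exists tA => //; rewrite Ev eqxx ny.
  - apply: (pos3 tA _ _ tAA (in_tterms_pred _) (in_tterms_pred _) Ib) => v Ev ny.
    by apply/hasP; exists tA => //; rewrite Ev eqxx ny orbT.
  - apply: (pos3 tA _ _ tAA (in_tterms_obj _) (in_tterms_obj _) Ic) => v Ev ny.
    by apply/hasP; exists tA => //; rewrite Ev eqxx ny !orbT.
have K4 tA : tq tA \in rewritings lam tA.
  apply: rewritings_intro; rewrite /alt;
    by case: ifP => _; rewrite eqxx ?orbT.
have K5 tA : tA \in A -> ch tA \in Tset lam SG SD m tA.
  move=> tAA; have [chS _] := chP tA tAA.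
  rewrite mem_filter chS andbT; apply/hasP; exists (tq tA) => //.
  rewrite K3 // sandboxE map_f //=; apply: decP_intro; apply: models_lamsub.
  exact: uniq_tS SGu chS.
have K6 : in_QA_sol lam SG A m.
  apply/hasP; exists (map tq A); first by apply: QA_intro.
  apply/allP => t0 /mapP [tA tAA ->]; rewrite K3 // sandboxE map_f //.
  by have [] := chP tA tAA.
have inSB tA : tA \in A -> [/\ lamsub lam (tsub (ch tA)) \in flatten (map tterms (sandbox lam SG)),
      lamsub lam (tpred (ch tA)) \in flatten (map tterms (sandbox lam SG)) &
      lamsub lam (tobj (ch tA)) \in flatten (map tterms (sandbox lam SG))].
  move=> tAA; have [chS _] := chP tA tAA.
  have H : lamsub3 lam (ch tA) \in sandbox lam SG by rewrite sandboxE map_f.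
  split; apply/flatten_mapP; exists (lamsub3 lam (ch tA)) => //.
  - exact: in_tterms_sub.
  - exact: in_tterms_pred.
  - exact: in_tterms_obj.
have K7 v : v \in vars A -> mval v \in consts (sandbox lam SG).
  move=> vA'; rewrite mem_consts /mval; case: ifP => P.
  - move: (P) => /hasP [tA tAA]; have [Ia Ib Ic] := models_inv (chP tA tAA).2.
    have [Sa Sb Sc] := inSB tA tAA.
    case/or3P => /andP [/eqP Ex ny].
    + have [<- _] := pos1 tA _ _ tAA (in_tterms_sub _) Ia v Ex vA' ny.
      by move: Sa; case: (tsub (ch tA)) ny.
    + have [<- _] := pos1 tA _ _ tAA (in_tterms_pred _) Ib v Ex vA' ny.
      by move: Sb; case: (tpred (ch tA)) ny.
    + have [<- _] := pos1 tA _ _ tAA (in_tterms_obj _) Ic v Ex vA' ny.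
      by move: Sc; case: (tobj (ch tA)) ny.
  - move/mem_varsP: vA' => [tA tAA TvT]; have [Sa Sb Sc] := inSB tA tAA.
    move: TvT; rewrite !inE => /or3P [] /eqP Ex.
    + case Ey: (tsub (ch tA)) Sa => [n|n|n] Sa; last by rewrite Sa.
      1,2: suff : Pv v by rewrite P.
      1,2: by apply/hasP; exists tA => //; rewrite -Ex eqxx Ey.
    + case Ey: (tpred (ch tA)) Sb => [n|n|n] Sb; last by rewrite Sb.
      1,2: suff : Pv v by rewrite P.
      1,2: by apply/hasP; exists tA => //; rewrite -Ex eqxx Ey orbT.
    + case Ey: (tobj (ch tA)) Sc => [n|n|n] Sc; last by rewrite Sc.
      1,2: suff : Pv v by rewrite P.
      1,2: by apply/hasP; exists tA => //; rewrite -Ex eqxx Ey !orbT.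
have mQ : List.In m (QA_sols lam SG A) by apply: QA_sols_intro.
have mTL v n : v \in vars A -> m v = Some (TL n) -> m0 v = Some (TL n).
  move=> vA' E; rewrite mE // /mval in E; case: ifP E => _ // [E].
  have [d Ed _] := m0v v vA'; by rewrite /val0 Ed /= in E; rewrite Ed E.
have mLit tA : tA \in A -> is_lit (app m (tobj tA)) -> app m (tobj tA) = app m0 (tobj tA).
  move=> tAA; case Eo: (tobj tA) => [n|n|n] //=.
  have nA : n \in vars A by apply: (vA tA _ tAA); rewrite -Eo in_tterms_obj.
  case Emn: (m n) => [[p|p|p]|] //= _; by rewrite (mTL n p nA Emn).
have K8 : ~~ discarded lam SG SD A C m.
  rewrite /discarded negb_or; apply/andP; split.
  - apply/hasPn => tA tAA; rewrite /discard_a /=; apply/negP => /andP [L /hasPn NH].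
    have := NH _ (K5 tA tAA); have [_ _ [Ic1 Ic2]] := models_inv (chP tA tAA).2.
    have EL := mLit tA tAA L; rewrite EL in L *.
    case Ey: (tobj (ch tA)) Ic1 Ic2 => [n|n|n] Ic1 Ic2 /=; rewrite ?(Ic1 isT) ?eqxx //.
    case: (boolP (n \in SD)) => nD /=; last by rewrite orbT.
    by rewrite (negbTE (Ic2 n erefl nD)) in L.
  - apply/hasPn => v vD; case Emv: (m v) => [[n|n|n]|] //; apply/negP => _.
    have vA' : v \in vars A by apply: (DeltaM_vars CA vD).
    have E0 := mTL v n vA' Emv.
    move: vD; rewrite /DeltaM !mem_cat => /or3P [].
    + rewrite mem_sp_vars => /hasP [tA tAA H].
      have /and3P [U1 U2 _] := allP Ig _ (m0I _ (map_f (app3 m0) tAA)).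
      by case/orP: H U1 U2 => /eqP Ev; rewrite /app3 /= ?Ev /= E0.
    + rewrite mem_sp_vars => /hasP [c' c'C H].
      have /and3P [U1 U2 _] := allP m0C _ (map_f (app3 m0) c'C).
      by case/orP: H U1 U2 => /eqP Ev; rewrite /app3 /= ?Ev /= E0.
    + case/flatten_mapP => tA tAA; rewrite /delta_b.
      case: (tobj tA) => // w; case: ifP => // /andP [/eqP E _]; rewrite inE => /eqP Ew.
      by rewrite -Ew Emv in E.
have [k Hk] := @zip_iota_ex (QA_sols lam SG A) 0 m mQ.
pose fk w := fun v => fr k v == w.
pose mu : mapping := fun w => if has (fk w) (vars A)
                              then m0 (nth 0 (vars A) (find (fk w) (vars A))) else None.
have muE v : v \in vars A -> mu (fr k v) = m0 v.
  move=> vA'; have H : has (fk (fr k v)) (vars A) by apply/hasP; exists v => //; rewrite /fk.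
  rewrite /mu H; have := nth_find 0 H; rewrite /fk => /eqP /frI [_ ->] //.
have muInv w d : mu w = Some d -> exists2 v, v \in vars A & w = fr k v /\ m0 v = Some d.
  rewrite /mu; case: ifP => // H E; exists (nth 0 (vars A) (find (fk w) (vars A))).
    by apply: mem_nth; rewrite -has_find.
  by split => //; have := nth_find 0 H; rewrite /fk => /eqP.
exists (app3 (subst_m lam fr k m) c).
  apply/foldG; right; exists k, m; split => //; split => //; exact: map_f.
exists mu; split; [|split].
- by move=> w d /muInv [v _ [_ E]]; apply: m0M E.
- have posc x : x \in tterms c -> app mu (app (subst_m lam fr k m) x) = app m0 x.
    case: x => // v xT; have vA' : v \in vars A by apply: CA; apply: tterms_vars cC xT.
    rewrite /= /subst_m mE //; have [d Ed cd] := m0v v vA'.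
    case: eqP => [E|NE] /=; first by rewrite muE // Ed.
    rewrite Ed /=; have Pvv : Pv v.
      by move: NE; rewrite /mval; case: (Pv v).
    by rewrite /mval Pvv /val0 Ed /= app_const.
  rewrite /app3; f_equal; [f_equal|]; apply: posc.
  + exact: in_tterms_sub.
  + exact: in_tterms_pred.
  + exact: in_tterms_obj.
- move=> w d wD /muInv [v vA' [Ew Ed]]; subst w.
  have [H|[j [mj [u [Hj NDj uD Ht]]]]] := foldD_out wD.
    move: (frF k v); rewrite vars_cat (SDv _ H) //.
  have mjQ := zip_iota_in Hj; have [Eu Ew] := L_tvar CA mjQ uD Ht.
  have [Ekj Evu] := frI _ _ _ _ Ew; subst j u.
  have Emm := zip_iota_uniq Hk Hj; subst mj.
  move: uD; rewrite /DeltaM !mem_cat => /or3P [].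
  + rewrite mem_sp_vars => /hasP [tA tAA H].
    have /and3P [U1 U2 _] := allP Ig _ (m0I _ (map_f (app3 m0) tAA)).
    by case/orP: H U1 U2 => /eqP Ev; rewrite /app3 /= ?Ev /= Ed; case: d {Ed}.
  + rewrite mem_sp_vars => /hasP [c' c'C H].
    have /and3P [U1 U2 _] := allP m0C _ (map_f (app3 m0) c'C).
    by case/orP: H U1 U2 => /eqP Ev; rewrite /app3 /= ?Ev /= Ed; case: d {Ed}.
  + case/flatten_mapP => tA tAA; rewrite /delta_b.
    case Eo: (tobj tA) => [n|n|n] //; case: ifP => // /andP [_ /hasPn NH].
    rewrite inE => /eqP En; subst n.
    have NP : ~~ Pv v.
      apply/negP => P; move: Eu; rewrite mE // /mval P => [[E]].
      by move: (PvNL v vA' P); rewrite E eqxx.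
    have := NH _ (K5 tA tAA); have [_ _ [Ic1 Ic2]] := models_inv (chP tA tAA).2.
    case Ey: (tobj (ch tA)) Ic1 Ic2 => [p|p|p] Ic1 Ic2.
    * by case/negP: NP; apply/hasP; exists tA => //; rewrite Eo Ey eqxx !orbT.
    * by case/negP: NP; apply/hasP; exists tA => //; rewrite Eo Ey eqxx !orbT.
    * rewrite /= negbK => pD; have := Ic2 p erefl pD.
      by rewrite /app3 /= Eo /= Ed.
Qed.

Lemma instance_cat S I1 I2 : instance S I1 -> instance S I2 -> instance S (I1 ++ I2).
Proof.
move=> [g1 m1] [g2 m2]; split; first by rewrite /is_graph all_cat; apply/andP.
by move=> t; rewrite mem_cat => /orP [/m1|/m2].
Qed.

Lemma in_rule_app_mono A C I J t : {subset I <= J} ->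
  in_rule_app A C I t -> in_rule_app A C J t.
Proof.
move=> IJ [tI|[m [[mM [mD mI]] H]]]; first by left; apply: IJ.
by right; exists m; split => //; split => //; split => // x /mI /IJ.
Qed.

Lemma tterms_app3 (s : mapping) c x : x \in tterms c -> app s x \in tterms (app3 s c).
Proof. rewrite !inE => /or3P [] /eqP ->; by rewrite eqxx ?orbT. Qed.

Lemma score_base SG SD A C lam fr t :
  is_schema (SG, SD) -> is_rule A C ->
  (forall k v, fr k v \notin vars (SG ++ A ++ C)) ->
  forall tS, tS \in SG -> models SD tS t ->
  exists2 tS, tS \in (score lam fr (SG, SD) A C).1 &
              models (score lam fr (SG, SD) A C).2 tS t.
Proof.
move=> [/= SGp [SGu [SDv SDsp]]] [Ap [Cp [CA Cu]]] frF tS tSG M.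
exists tS; first by apply/foldG; left.
apply: (models_restrict M) => w wD wT.
have [//|[j [mj [u [Hj NDj uD Ht]]]]] := foldD_out wD.
have mjQ := zip_iota_in Hj; have [Eu Ew] := L_tvar CA mjQ uD Ht.
move: (frF j u); rewrite -Ew vars_cat.
by rewrite (tterms_vars tSG wT).
Qed.

Unset Implicit Arguments.

Theorem theorem2 (S : schema) (A C : seq tp) (lam : nat) (fr : nat -> nat -> nat) :
  is_schema S -> is_rule A C ->
  (* λ is a fresh URI not occurring in S^G, A or C *)
  TU lam \notin flatten (map tterms (S.1 ++ A ++ C)) ->
  (* the variables ?v* are fresh: new for each mapping and not used elsewhere *)
  (forall k v k' v', fr k v = fr k' v' -> k = k' /\ v = v') ->
  (forall k v, fr k v \notin vars (S.1 ++ A ++ C)) ->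
  forall I' : seq tp,
    instance (score lam fr S A C) I' <->
    exists I : seq tp, instance S I /\ (forall t, t \in I' -> in_rule_app A C I t).
Proof.
case: S => SG SD HS HR Fr frI frF I'; split.
- move=> [I'g I'm].
  have one t : t \in I' -> exists I, instance (SG, SD) I /\ in_rule_app A C I t.
    move=> tI; have Tt := allP I'g _ tI.
    have [tS /foldG [tSG|[k [m [Hk [ND tSC]]]]] M] := I'm _ tI.
      exists [:: t]; split; last by left; rewrite inE.
      split; first by rewrite /is_graph /= Tt.
      move=> t0; rewrite inE => /eqP ->; exists tS => //.
      by apply: (models_restrict M) => w wD _; apply: foldD_mono.
    have [HS1 [HS2 [HS3 HS4]]] := HS; have [HR1 [HR2 [HR3 HR4]]] := HR.
    case/mapP: tSC => c cC Ec; subst tS.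
    have [mu [muM [Et muD]]] := M.
    apply: (sub_added HS HR Fr (zip_iota_in Hk) ND cC _ muM muD Et Tt).
    move=> v vA Emv vD vc.
    apply: (@foldD_in lam fr SG SD A C _ (SG, SD) k m v (fr k v) Hk ND vD); first by rewrite /= /subst_m Emv eqxx /= inE.
    apply/mem_varsP; exists (app3 (subst_m lam fr k m) c); first exact: map_f.
    have := tterms_app3 (subst_m lam fr k m) (x := TV v) (c := c).
    rewrite /= /subst_m Emv eqxx /=; apply.
    by move/mem_varsP: vc => [c' ]; rewrite inE => /eqP ->.
  have allI : forall l : seq tp, {subset l <= I'} ->
      exists I, instance (SG, SD) I /\ (forall t, t \in l -> in_rule_app A C I t).
    elim=> [_|t l IH sub].
      by exists [::]; split => //; split.
    have [I1 [H1 R1]] := IH (fun x xl => sub x (mem_behead (s := t :: l) xl)).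
    have [I2 [H2 R2]] := one t (sub t (mem_head _ _)).
    exists (I2 ++ I1); split; first exact: instance_cat.
    move=> t0; rewrite inE => /orP [/eqP ->|t0l].
      by apply: (in_rule_app_mono _ R2) => x xI; rewrite mem_cat xI.
    by apply: (in_rule_app_mono _ (R1 _ t0l)) => x xI; rewrite mem_cat xI orbT.
  exact: allI.
- move=> [I [[Ig Im] IR]]; split.
  + apply/allP => t tI; case: (IR t tI) => [/(allP Ig) //|[m0 [_ [G tC]]]].
    exact: (allP G).
  + move=> t tI; case: (IR t tI) => [tII|[m0 [Sol [G tC]]]].
      have [tS tSG M] := Im _ tII.
      exact: (@score_base SG SD A C lam fr t HS HR frF tS tSG M).
    case/mapP: tC => c cC ->.
    exact: (sup_added HS HR Fr frI frF (conj Ig Im) Sol G cC).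
Qed.
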